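(* Let $T:\mathbb{R}^M\times\cdots\times\mathbb{R}^M\to\mathbb{R}^D$ ($N$ factors) be a real $N$-linear contraction with respect to the Euclidean norm, and regard $T$ as the real $D\times M^N$ matrix with entries $T_{i,s}$, so that $T^\dagger T$ is a real symmetric matrix on $(\mathbb{R}^M)^{\otimes N}$. Then the following are equivalent: 1. $T$ has a norm-preserving dilation, i.e. there is a norm-preserving $N$-linear map $\tilde T:\mathbb{R}^M\times\cdots\times\mathbb{R}^M\to\mathbb{R}^{D'}$ with $D'\ge D$ whose first $D$ output coordinates coincide with $T$; 2. there is a real symmetric matrix $Q$ on $(\mathbb{R}^M)^{\otimes N}$ of the form $Q=\sum_gc_g\bigotimes_{k=1}^NG_{g_k}$ with $c_g=0$ whenever all components of $g$ are non-negative, such that $\mathbb{1}\ge T^\dagger T+Q$; 3. $\mathrm{tr}[\rho\,T^\dagger T]\le1$ for all real density matrices $\rho$ on $(\mathbb{R}^M)^{\otimes N}$ of the form $\rho=\sum_{g\ge0}c_g\bigotimes_{k=1}^NG_{g_k}$ (sum only over $g$ with all components non-negative).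
   Context: An $N$-linear map is $T(a^{(1)},\dots,a^{(N)})_i=\sum_{s\in\{1,\dots,M\}^N}T_{i,s}\prod_ka^{(k)}_{s_k}$; it is a contraction if $\|T(a^{(1)},\dots,a^{(N)})\|\le\prod_k\|a^{(k)}\|$ for all inputs and norm-preserving if equality always holds. $\{G_\gamma\}$ is a set of $M^2$ real $M\times M$ matrices forming a basis of all real $M\times M$ matrices, orthogonal w.r.t. $(X,Y)\mapsto\mathrm{tr}[XY^T]$, with $G_0=\mathbb{1}$, $G_\gamma$ symmetric for $\gamma\ge0$ and antisymmetric for $\gamma<0$, normalized by $\mathrm{tr}[G_\gamma G_{\gamma'}^T]=2\delta_{\gamma\gamma'}$ for $\gamma,\gamma'\ne0$; $g=(g_1,\dots,g_N)$ ranges over $N$-tuples of indices and $c_g\in\mathbb{R}$. A real density matrix is a real positive semidefinite matrix of trace one; $X\le Y$ means $Y-X$ is positive semidefinite. *)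

(* Defs.v *)
From HB Require Import structures.
From mathcomp Require Import all_boot all_order all_algebra.
From mathcomp Require Import reals.
Set Implicit Arguments. Unset Strict Implicit. Unset Printing Implicit Defensive.
Import Order.TTheory GRing.Theory Num.Theory.
Local Open Scope ring_scope.

Section Defs.
Variable R : realType.

(* Multi-indices s in {1..M}^N, indexing the standard basis of (R^M)^{⊗N}. *)
Definition midx (N M : nat) := {ffun 'I_N -> 'I_M}.

Definition enorm (n : nat) (v : 'I_n -> R) : R := Num.sqrt (\sum_(i < n) v i ^+ 2).

Definition mlapply (N M D : nat) (T : 'I_D -> midx N M -> R)
  (a : 'I_N -> 'I_M -> R) : 'I_D -> R :=
  fun i => \sum_(s : midx N M) T i s * \prod_(k < N) a k (s k).

Definition is_contraction (N M D : nat) (T : 'I_D -> midx N M -> R) : Prop :=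
  forall a : 'I_N -> 'I_M -> R,
    enorm (mlapply T a) <= \prod_(k < N) enorm (a k).

Definition norm_preserving (N M D : nat) (T : 'I_D -> midx N M -> R) : Prop :=
  forall a : 'I_N -> 'I_M -> R,
    enorm (mlapply T a) = \prod_(k < N) enorm (a k).

Definition fmat (S : finType) := S -> S -> R.

Definition fsymm (S : finType) (A : fmat S) : Prop := forall s t, A s t = A t s.

Definition fpsd (S : finType) (A : fmat S) : Prop :=
  fsymm A /\ forall x : S -> R, 0 <= \sum_(s : S) \sum_(t : S) x s * A s t * x t.

Definition ftrace (S : finType) (A : fmat S) : R := \sum_(s : S) A s s.

Definition fmul (S : finType) (A B : fmat S) : fmat S :=
  fun s t => \sum_(u : S) A s u * B u t.

Definition fid (S : finType) : fmat S := fun s t => if s == t then 1 else 0.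

Definition floe (S : finType) (A B : fmat S) : Prop := fpsd (fun s t => B s t - A s t).

Definition density (S : finType) (rho : fmat S) : Prop := fpsd rho /\ ftrace rho = 1.

Definition TdagT (N M D : nat) (T : 'I_D -> midx N M -> R) : fmat (midx N M) :=
  fun s t => \sum_(i < D) T i s * T i t.

(* Hypotheses on the family {G_gamma}: indices in a finite type Gam, with a
   distinguished index g0 (gamma = 0) and a predicate nonneg (gamma >= 0). *)
Definition Gbasis (M : nat) (Gam : finType) (nonneg : pred Gam) (g0 : Gam)
  (G : Gam -> 'M[R]_M) : Prop :=
  #|Gam| = (M * M)%N /\
      (forall X : 'M[R]_M, exists c : Gam -> R, X = \sum_(g : Gam) c g *: G g) /\
      (forall g g', g != g' -> \tr (G g *m (G g')^T) = 0) /\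
      (forall g, g != g0 -> \tr (G g *m (G g)^T) = 2) /\
      nonneg g0 /\ G g0 = 1%:M /\
      (forall g, nonneg g -> (G g)^T = G g) /\
      (forall g, ~~ nonneg g -> (G g)^T = - G g).

Definition Gtensor (N M : nat) (Gam : finType) (G : Gam -> 'M[R]_M)
  (g : {ffun 'I_N -> Gam}) : fmat (midx N M) :=
  fun s t => \prod_(k < N) G (g k) (s k) (t k).

Definition Gexpand (N M : nat) (Gam : finType) (G : Gam -> 'M[R]_M)
  (c : {ffun 'I_N -> Gam} -> R) : fmat (midx N M) :=
  fun s t => \sum_(g : {ffun 'I_N -> Gam}) c g * Gtensor G g s t.

End Defs.

(* Main.v *)
Require Import Defs.
From HB Require Import structures.
From mathcomp Require Import all_boot all_order all_algebra.
From mathcomp Require Import reals.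
Import Order.TTheory GRing.Theory Num.Theory.
Local Open Scope ring_scope.
From mathcomp Require ring lra boolp classical_sets topology normedtype derive.

Module Dev.
Import ring lra boolp classical_sets topology normedtype derive.
Import numFieldNormedType.Exports.
Local Open Scope ring_scope.
Set Implicit Arguments. Unset Strict Implicit. Unset Printing Implicit Defensive.

Section Alg.
Variable R : realType.
Variable S : finType.
Implicit Types (A B P X Y : fmat R S) (x y : S -> R).

Definition qf X x : R := \sum_s \sum_t x s * X s t * x t.
Definition dot X Y : R := \sum_s \sum_t X s t * Y s t.
Definition del (s : S) : S -> R := fun u => (u == s)%:R.

Lemma sum_delr (F : S -> R) s : \sum_u F u * del s u = F s.
Proof.
rewrite (bigD1 s) //= /del eqxx mulr1 big1 ?addr0 // => u /negbTE ->.
by rewrite mulr0.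
Qed.

Lemma sum_dell (F : S -> R) s : \sum_u del s u * F u = F s.
Proof. by rewrite -[RHS](sum_delr F s); apply: eq_bigr => u _; rewrite mulrC. Qed.

Lemma qf_del X s : qf X (del s) = X s s.
Proof.
rewrite /qf -[RHS](sum_dell (fun u => X u s)) ; apply: eq_bigr => u _.
rewrite -[RHS](sum_delr (fun t => del s u * X u t)); apply: eq_bigr => t _.
by [].
Qed.

Lemma qf_addsc P x s l : fsymm P ->
  qf P (fun u => x u + l * del s u) =
  qf P x + 2 * l * (\sum_t P s t * x t) + l ^+ 2 * P s s.
Proof.
move=> sP.
have E1 : \sum_a \sum_b x a * P a b * (l * del s b) = l * \sum_t P s t * x t.
  rewrite mulr_sumr; apply: eq_bigr => a _.
  transitivity (x a * P a s * l); last by rewrite sP; ring.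
  rewrite -(sum_delr (fun b => x a * P a b * l)) /=.
  apply: eq_bigr => b _; ring.
have E2 : \sum_a \sum_b (l * del s a) * P a b * x b = l * \sum_t P s t * x t.
  rewrite -[RHS](sum_dell (fun a => l * \sum_b P a b * x b)) /=.
  apply: eq_bigr => a _; rewrite !mulr_sumr; apply: eq_bigr => b _; ring.
have E3 : \sum_a \sum_b (l * del s a) * P a b * (l * del s b) = l ^+ 2 * P s s.
  rewrite -[RHS](sum_dell (fun a => l ^+ 2 * P a s)) /=.
  apply: eq_bigr => a _.
  rewrite -[RHS](sum_delr (fun b => del s a * (l ^+ 2 * P a b))) /=.
  apply: eq_bigr => b _; ring.
rewrite /qf.
transitivity (\sum_a \sum_b (x a * P a b * x b) + \sum_a \sum_b (x a * P a b * (l * del s b))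
  + \sum_a \sum_b (l * del s a * P a b * x b) + \sum_a \sum_b (l * del s a * P a b * (l * del s b))).
  rewrite -!big_split; apply: eq_bigr => a _; rewrite -!big_split; apply: eq_bigr => b _ /=; ring.
rewrite E1 E2 E3; ring.
Qed.

Lemma psd_diag P s : fpsd P -> 0 <= P s s.
Proof. by case=> _ /(_ (del s)); rewrite -/(qf P (del s)) qf_del. Qed.

Lemma psd_row0 P s t : fpsd P -> P s s = 0 -> P s t = 0.
Proof.
move=> [sP qP] Pss; apply/eqP; apply/negP => /negP nz.
have := qP (fun u => del t u + (- (P t t + 1) / (2 * P s t)) * del s u).
rewrite -/(qf P _) qf_addsc // Pss mulr0 addr0.
have -> : \sum_t0 P s t0 * del t t0 = P s t by rewrite sum_delr.
rewrite qf_del.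
have -> : 2 * (- (P t t + 1) / (2 * P s t)) * P s t = - (P t t + 1).
  by field.
move=> h; lra.
Qed.

Lemma psd_cs P s x : fpsd P -> 0 < P s s ->
  (\sum_t P s t * x t) ^+ 2 / P s s <= qf P x.
Proof.
move=> [sP qP] Pss.
have := qP (fun u => x u + (- (\sum_t P s t * x t) / P s s) * del s u).
rewrite -/(qf P _) qf_addsc //.
set b := \sum_t _.
have -> : qf P x + 2 * (- b / P s s) * b + (- b / P s s) ^+ 2 * P s s
   = qf P x - b ^+ 2 / P s s by field; rewrite gt_eqF.
by rewrite subr_ge0.
Qed.

Lemma qf_sumv (l : seq (S -> R)) x :
  qf (fun s t => \sum_(v <- l) v s * v t) x = \sum_(v <- l) (\sum_s v s * x s) ^+ 2.
Proof.
rewrite /qf.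
under eq_bigr => a _ do under eq_bigr => b _ do rewrite mulr_sumr mulr_suml.
under eq_bigr => a _ do rewrite exchange_big /=.
rewrite exchange_big /=; apply: eq_bigr => v _.
rewrite expr2 mulr_suml; apply: eq_bigr => a _; rewrite mulr_sumr.
apply: eq_bigr => b _; ring.
Qed.

Lemma psd_factor P : fpsd P ->
  exists l : seq (S -> R), forall s t, P s t = \sum_(v <- l) v s * v t.
Proof.
suff H : forall n (F : {set S}) P, (#|F| <= n)%N -> fpsd P ->
   (forall s t, s \notin F -> P s t = 0) ->
   exists l : seq (S -> R), forall s t, P s t = \sum_(v <- l) v s * v t.
  by move=> hP; apply: (H #|[set: S]| [set: S]) => // s t; rewrite finset.in_setT.
elim=> [|n IH] F {}P.
  rewrite leqn0 finset.cards_eq0 => /eqP -> _ HP; exists [::] => s t.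
  by rewrite big_nil HP // finset.in_set0.
move=> cF hP HP.
have [F0|[s sF]] := finset.set_0Vmem F.
  exists [::] => u t; rewrite big_nil HP // F0 finset.in_set0 //.
have cF' : (#|F :\ s| <= n)%N by move: cF; rewrite (finset.cardsD1 s F) sF add1n ltnS.
have [sP qP] := hP.
have [Pss0|Pssn] := eqVneq (P s s) 0.
  apply: (IH (F :\ s)) => // u t; rewrite finset.in_setD1 negb_and negbK.
  case/orP => [/eqP -> |]; first exact: psd_row0.
  exact: HP.
have Pss : 0 < P s s by rewrite lt_def Pssn psd_diag.
pose v := fun t => P s t / Num.sqrt (P s s).
have sq : Num.sqrt (P s s) ^+ 2 = P s s by rewrite sqr_sqrtr // ltW.
have sqn : Num.sqrt (P s s) != 0 by rewrite sqrtr_eq0 -ltNge.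
pose P' := fun t u => P t u - v t * v u.
have hP' : fpsd P'.
  split => [t u|x]; first by rewrite /P' sP mulrC.
  rewrite -/(qf P' x).
  have -> : qf P' x = qf P x - (\sum_t P s t * x t) ^+ 2 / P s s.
    have -> : qf P' x = qf P x - qf (fun a b => \sum_(w <- [:: v]) w a * w b) x.
      rewrite /qf -sumrB; apply: eq_bigr => a _; rewrite -sumrB.
      by apply: eq_bigr => b _; rewrite big_seq1 /P'; ring.
    rewrite qf_sumv big_seq1; congr (_ - _).
    rewrite /v (_ : \sum_s0 _ = (\sum_t P s t * x t) / Num.sqrt (P s s)).
      by rewrite expr_div_n sq.
    by rewrite mulr_suml; apply: eq_bigr => a _; rewrite mulrAC.
  by rewrite subr_ge0 psd_cs.
have [l Hl] : exists l : seq (S -> R), forall a b, P' a b = \sum_(w <- l) w a * w b.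
  apply: (IH (F :\ s)) => // u t; rewrite finset.in_setD1 negb_and negbK.
  case/orP => [/eqP -> |uF].
    rewrite /P' /v mulrACA -invfM -expr2 sq mulrAC mulfV ?mul1r ?subrr //.
  by rewrite /P' /v HP // sP HP // !mul0r subrr.
exists (v :: l) => a b; rewrite big_cons -Hl /P'; ring.
Qed.

Lemma dot_outer X v : dot X (fun s t => v s * v t) = qf X v.
Proof. by apply: eq_bigr => a _; apply: eq_bigr => b _; ring. Qed.

Lemma dot_sumv X (l : seq (S -> R)) :
  dot X (fun s t => \sum_(v <- l) v s * v t) = \sum_(v <- l) qf X v.
Proof.
rewrite /dot; under eq_bigr => a _ do under eq_bigr => b _ do rewrite mulr_sumr.
under eq_bigr => a _ do rewrite exchange_big /=.
rewrite exchange_big /=; apply: eq_bigr => v _; rewrite -dot_outer.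
by apply: eq_bigr => a _; apply: eq_bigr => b _.
Qed.

Lemma dot_psd X P : fpsd X -> fpsd P -> 0 <= dot X P.
Proof.
move=> hX /psd_factor [l Hl].
rewrite (_ : dot X P = dot X (fun s t => \sum_(v <- l) v s * v t)); last first.
  by apply: eq_bigr => a _; apply: eq_bigr => b _; rewrite Hl.
rewrite dot_sumv; apply: sumr_ge0 => v _; exact: hX.2.
Qed.

End Alg.
Arguments del {R S} s _.

Section Alg2.
Variable R : realType.
Variable S : finType.
Implicit Types (X Y : fmat R S).

Lemma dot_decomp (I : finType) (w : I -> R) (v : I -> S -> R) X Y :
  (forall s t, X s t = \sum_i w i * v i s * v i t) ->
  dot X Y = \sum_i w i * qf Y (v i).
Proof.
move=> HX; rewrite /dot.
under eq_bigr => s _ do under eq_bigr => t _ do rewrite HX mulr_suml.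
under eq_bigr => s _ do rewrite exchange_big /=.
rewrite exchange_big /=; apply: eq_bigr => i _.
rewrite /qf mulr_sumr; apply: eq_bigr => s _; rewrite mulr_sumr.
apply: eq_bigr => t _; ring.
Qed.

Lemma qf_lin (I : finType) (c : I -> R) (Z : I -> fmat R S) x :
  qf (fun s t => \sum_i c i * Z i s t) x = \sum_i c i * qf (Z i) x.
Proof.
rewrite /qf.
under eq_bigr => s _ do under eq_bigr => t _ do rewrite mulr_sumr mulr_suml.
under eq_bigr => s _ do rewrite exchange_big /=.
rewrite exchange_big /=; apply: eq_bigr => i _.
rewrite mulr_sumr; apply: eq_bigr => s _; rewrite mulr_sumr.
apply: eq_bigr => t _; ring.
Qed.

Lemma dot_linl (I : finType) (c : I -> R) (Z : I -> fmat R S) Y :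
  dot (fun s t => \sum_i c i * Z i s t) Y = \sum_i c i * dot (Z i) Y.
Proof.
rewrite /dot.
under eq_bigr => s _ do under eq_bigr => t _ do rewrite mulr_suml.
under eq_bigr => s _ do rewrite exchange_big /=.
rewrite exchange_big /=; apply: eq_bigr => i _.
rewrite mulr_sumr; apply: eq_bigr => s _; rewrite mulr_sumr.
apply: eq_bigr => t _; ring.
Qed.

Lemma dotC X Y : dot X Y = dot Y X.
Proof. by apply: eq_bigr => s _; apply: eq_bigr => t _; rewrite mulrC. Qed.

End Alg2.
Section Tens.
Variable R : realType.
Variables N M : nat.
Local Notation S := (midx N M).

Definition prodv (a : 'I_N -> 'I_M -> R) : S -> R := fun s => \prod_k a k (s k).

Lemma sum_prod (F : 'I_N -> 'I_M -> R) :
  \sum_(s : S) \prod_k F k (s k) = \prod_k \sum_j F k j.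
Proof. by rewrite bigA_distr_bigA. Qed.

Lemma sum2_prod (F : 'I_N -> 'I_M -> 'I_M -> R) :
  \sum_(s : S) \sum_(t : S) \prod_k F k (s k) (t k) = \prod_k \sum_i \sum_j F k i j.
Proof.
rewrite -sum_prod; apply: eq_bigr => s _; exact: sum_prod.
Qed.

End Tens.
Section Tens2.
Variable R : realType.
Variables N M : nat.
Local Notation S := (midx N M).
Variable Gam : finType.
Variable G : Gam -> 'M[R]_M.
Implicit Types (g h : {ffun 'I_N -> Gam}) (a : 'I_N -> 'I_M -> R) (x : S -> R).

Lemma qf_Gtensor g (a : 'I_N -> 'I_M -> R) :
  qf (Gtensor G g) (prodv a) =
  \prod_k \sum_i \sum_j a k i * G (g k) i j * a k j.
Proof.
rewrite -sum2_prod /qf; apply: eq_bigr => s _; apply: eq_bigr => t _.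
by rewrite /prodv /Gtensor /= -!big_split.
Qed.

Lemma dot_Gtensor g h :
  dot (Gtensor G g) (Gtensor G h) = \prod_k \tr (G (g k) *m (G (h k))^T).
Proof.
transitivity (\sum_(s : S) \sum_(t : S) \prod_k (G (g k) (s k) (t k) * G (h k) (s k) (t k))).
  by apply: eq_bigr => s _; apply: eq_bigr => t _; rewrite /Gtensor big_split.
rewrite (sum2_prod (fun k i j => G (g k) i j * G (h k) i j)); apply: eq_bigr => k _.
rewrite /mxtrace; apply: eq_bigr => i _; rewrite mxE; apply: eq_bigr => j _.
by rewrite mxE.
Qed.

Lemma mlapply_sq D (T : 'I_D -> S -> R) a :
  \sum_i (mlapply T a i) ^+ 2 = qf (TdagT T) (prodv a).
Proof.
rewrite /qf /TdagT /mlapply.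
under eq_bigr => i _ do rewrite expr2 mulr_suml.
rewrite exchange_big /=; apply: eq_bigr => s _.
under eq_bigr => i _ do rewrite mulr_sumr.
rewrite exchange_big /=; apply: eq_bigr => t _.
rewrite mulr_sumr mulr_suml; apply: eq_bigr => i _ /=; rewrite /prodv; ring.
Qed.

Lemma qf_fid x : qf (@fid R S) x = \sum_s x s ^+ 2.
Proof.
apply: eq_bigr => s _; rewrite (bigD1 s) //= /fid eqxx big1 ?addr0 ?mulr1 ?expr2 //.
by move=> t /negbTE; rewrite eq_sym => ->; rewrite mulr0 mul0r.
Qed.

Lemma norm_sq (a : 'I_N -> 'I_M -> R) :
  \prod_k (\sum_j a k j ^+ 2) = qf (@fid R S) (prodv a).
Proof.
rewrite qf_fid -sum_prod; apply: eq_bigr => s _.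
by rewrite /prodv prodrXl.
Qed.

Lemma prod_sqrt (F : 'I_N -> R) : (forall k, 0 <= F k) ->
  \prod_k Num.sqrt (F k) = Num.sqrt (\prod_k F k).
Proof.
move=> F0; elim/big_rec2: _ => [|k x y _ ->]; first by rewrite sqrtr1.
by rewrite sqrtrM.
Qed.

Lemma enorm_sq n (v : 'I_n -> R) : enorm v = Num.sqrt (\sum_i v i ^+ 2).
Proof. by []. Qed.

Lemma norm_pres_qf D (T : 'I_D -> S -> R) :
  norm_preserving T <->
  forall a, qf (TdagT T) (prodv a) = qf (@fid R S) (prodv a).
Proof.
have E : forall a, \prod_k enorm (a k) = Num.sqrt (qf (@fid R S) (prodv a)).
  move=> a; rewrite /enorm prod_sqrt ?norm_sq // => k.
  by apply: sumr_ge0 => j _; rewrite sqr_ge0.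
have nn : forall a, 0 <= qf (@fid R S) (prodv a).
  by move=> a; rewrite -norm_sq; apply: prodr_ge0 => k _; apply: sumr_ge0 => j _; rewrite sqr_ge0.
have nT : forall a, 0 <= qf (TdagT T) (prodv a).
  by move=> a; rewrite -mlapply_sq; apply: sumr_ge0 => j _; rewrite sqr_ge0.
split => H a.
  have := H a; rewrite E /enorm mlapply_sq => /eqP.
  by rewrite eqr_sqrt // => /eqP.
by rewrite E /enorm mlapply_sq H.
Qed.

End Tens2.
Section Basis.
Variable R : realType.
Variables N M : nat.
Local Notation S := (midx N M).
Variable Gam : finType.
Variable nonneg : pred Gam.
Variable g0 : Gam.
Variable G : Gam -> 'M[R]_M.
Hypothesis HG : Gbasis nonneg g0 G.
Implicit Types (g h : {ffun 'I_N -> Gam}) (a : 'I_N -> 'I_M -> R) (x : S -> R).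

Definition nG (c : Gam) : R := \tr (G c *m (G c)^T).
Definition ng g : R := \prod_k nG (g k).

Lemma mdotE (A B : 'M[R]_M) : \tr (A *m B^T) = \sum_i \sum_j A i j * B i j.
Proof.
rewrite /mxtrace; apply: eq_bigr => i _; rewrite mxE; apply: eq_bigr => j _.
by rewrite mxE.
Qed.

Lemma natr_and (b1 b2 : bool) : ((b1 && b2)%:R : R) = b1%:R * b2%:R.
Proof. by case: b1; case: b2; rewrite /= ?(mulr1, mul0r, mulr0). Qed.

Lemma M_gt0 : (0 < M)%N.
Proof.
case: HG => cardG _.
have : (0 < #|Gam|)%N by apply/card_gt0P; exists g0.
by rewrite cardG muln_gt0 andbb.
Qed.

Lemma nG_neq0 c : nG c != 0.
Proof.
case: HG => _ [_ [_ [n2 [_ [G0 _]]]]].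
have [->|ne] := eqVneq c g0; last by rewrite /nG n2 // pnatr_eq0.
rewrite /nG G0 trmx1 mulmx1 mxtrace1 pnatr_eq0 -lt0n; exact: M_gt0.
Qed.

Lemma ng_neq0 g : ng g != 0.
Proof. by apply/prodf_neq0 => k _; exact: nG_neq0. Qed.

Lemma span1 (p q p' q' : 'I_M) :
  ((p == p') && (q == q'))%:R = \sum_c (G c p' q' / nG c) * G c p q.
Proof.
case: HG => _ [span [orth _]].
have [cf Hc] := span (delta_mx p' q').
have E1 : forall c, \tr (delta_mx p' q' *m (G c)^T) = G c p' q'.
  move=> c; rewrite mdotE.
  under eq_bigr => i _ do under eq_bigr => j _ do rewrite mxE natr_and mulrC mulrA.
  rewrite -(sum_dell (fun i => G c i q') p') /=; apply: eq_bigr => i _.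
  rewrite -(sum_delr (fun j => del p' i * G c i j) q') /=; apply: eq_bigr => j _.
  ring.
have E2 : forall c, cf c = G c p' q' / nG c.
  move=> c; rewrite -E1 Hc mulmx_suml raddf_sum (bigD1 c) //= big1 ?addr0.
    by rewrite -scalemxAl mxtraceZ mulfK // nG_neq0.
  move=> c' nc; rewrite -scalemxAl mxtraceZ orth ?mulr0 //.
have := congr1 (fun A : 'M[R]_M => A p q) Hc; rewrite /= mxE summxE => ->.
by apply: eq_bigr => c _; rewrite mxE E2.
Qed.

Lemma ffeq_prod (s s' t t' : S) :
  ((s == s') && (t == t'))%:R = \prod_k ((s k == s' k) && (t k == t' k))%:R :> R.
Proof.
have [/forallP H|/forallPn [k Hk]] := boolP [forall k, (s k == s' k) && (t k == t' k)].
  have -> : s = s' by apply/ffunP => k; have /andP[/eqP] := H k.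
  have -> : t = t' by apply/ffunP => k; have /andP[_ /eqP] := H k.
  by rewrite !eqxx big1 // => k _; rewrite !eqxx.
rewrite (bigD1 k) //= (negbTE Hk) mul0r.
case: eqP => [ss'|]; case: eqP => [tt'|] //=.
by move: Hk; rewrite ss' tt' !eqxx.
Qed.

Lemma delta_tensor (s s' t t' : S) :
  \sum_g (Gtensor G g s' t' / ng g) * Gtensor G g s t = ((s == s') && (t == t'))%:R.
Proof.
rewrite ffeq_prod.
under eq_bigr => k _ do rewrite span1.
rewrite bigA_distr_bigA /=; apply: eq_bigr => g _.
by rewrite /Gtensor /ng -prodf_div -big_split.
Qed.

Lemma span_tensor (X : fmat R S) s t :
  X s t = \sum_g (dot (Gtensor G g) X / ng g) * Gtensor G g s t.
Proof.
transitivity (\sum_(s' : S) \sum_(t' : S) X s' t' *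
   \sum_g (Gtensor G g s' t' / ng g) * Gtensor G g s t).
  under eq_bigr => s' _ do under eq_bigr => t' _ do rewrite delta_tensor natr_and.
  rewrite -[LHS](sum_delr (fun s' => X s' t) s) /=; apply: eq_bigr => s' _.
  rewrite -(sum_delr (fun t' => X s' t' * del s s') t) /=; apply: eq_bigr => t' _.
  by rewrite /del [s == s']eq_sym [t == t']eq_sym mulrA.
rewrite /dot.
under eq_bigr => s' _ do under eq_bigr => t' _ do rewrite mulr_sumr.
under eq_bigr => s' _ do rewrite exchange_big /=.
rewrite exchange_big /=; apply: eq_bigr => g _.
rewrite mulr_suml mulr_suml; apply: eq_bigr => s' _.
rewrite mulr_suml mulr_suml; apply: eq_bigr => t' _; ring.
Qed.

End Basis.
Section Sym.
Variable R : realType.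
Variables N M : nat.
Local Notation S := (midx N M).
Variable Gam : finType.
Variable G : Gam -> 'M[R]_M.
Implicit Types (g h : {ffun 'I_N -> Gam}) (a : 'I_N -> 'I_M -> R) (x : S -> R).

Definition sg (b : bool) : R := if b then 1 else -1.
Definition uu (i j : 'I_M) (b : bool) (p : 'I_M) : R := (i == p)%:R + sg b * (j == p)%:R.
Definition lam (Z : 'M[R]_M) (i j : 'I_M) (b : bool) : R := Z i j / 4 * sg b.

Lemma sym_dec (Z : 'M[R]_M) : Z^T = Z -> forall p q,
  Z p q = \sum_i \sum_j \sum_b lam Z i j b * uu i j b p * uu i j b q.
Proof.
move=> eZ p q.
have sZ : Z q p = Z p q by rewrite -[in LHS]eZ mxE.
transitivity (\sum_i \sum_j (Z i j / 2 * del p i * del q j + Z i j / 2 * del q i * del p j)); last first.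
  apply: eq_bigr => i _; apply: eq_bigr => j _.
  rewrite big_bool /lam /uu /sg /del /=; by field.
under eq_bigr => i _ do rewrite big_split /= (sum_delr (fun j => Z i j / 2 * del p i)) (sum_delr (fun j => Z i j / 2 * del q i)).
rewrite big_split /= (sum_delr (fun i => Z i q / 2)) (sum_delr (fun i => Z i p / 2)) sZ; by field.
Qed.

Lemma qf0_dot (Y : fmat R S) g : (forall a, qf Y (prodv a) = 0) ->
  (forall k, (G (g k))^T = G (g k)) -> dot (Gtensor G g) Y = 0.
Proof.
move=> HY sG.
pose F := fun k (i j : 'I_M) (b : bool) (p q : 'I_M) =>
  lam (G (g k)) i j b * uu i j b p * uu i j b q.
pose w := fun (z : {ffun 'I_N -> 'I_M} * {ffun 'I_N -> 'I_M} * {ffun 'I_N -> bool}) =>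
  \prod_k lam (G (g k)) (z.1.1 k) (z.1.2 k) (z.2 k).
pose v := fun (z : {ffun 'I_N -> 'I_M} * {ffun 'I_N -> 'I_M} * {ffun 'I_N -> bool}) =>
  prodv (fun k p => uu (z.1.1 k) (z.1.2 k) (z.2 k) p).
rewrite (@dot_decomp _ _ _ w v); last first.
  move=> s t; rewrite /Gtensor.
  under eq_bigr => k _ do rewrite (sym_dec (sG k) (s k) (t k)).
  rewrite (bigA_distr_bigA (fun k i => \sum_j \sum_b F k i j b (s k) (t k))).
  transitivity (\sum_(fi : {ffun 'I_N -> 'I_M}) \sum_(fj : {ffun 'I_N -> 'I_M}) \sum_(fb : {ffun 'I_N -> bool})
     w ((fi, fj), fb) * v ((fi, fj), fb) s * v ((fi, fj), fb) t); last first.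
    rewrite (pair_bigA _ (fun fi fj => \sum_(fb : {ffun 'I_N -> bool}) w ((fi, fj), fb) * v ((fi, fj), fb) s * v ((fi, fj), fb) t)) /=.
    rewrite (pair_bigA _ (fun z fb => w (z, fb) * v (z, fb) s * v (z, fb) t)) /=.
    by apply: eq_bigr => [[[fi fj] fb]] _.
  apply: eq_bigr => fi _.
  rewrite (bigA_distr_bigA (fun k j => \sum_b F k (fi k) j b (s k) (t k))).
  apply: eq_bigr => fj _.
  rewrite (bigA_distr_bigA (fun k b => F k (fi k) (fj k) b (s k) (t k))).
  apply: eq_bigr => fb _.
  by rewrite /w /v /prodv /F /= -!big_split.
by apply: big1 => z _; rewrite HY mulr0.
Qed.

Lemma qf_antisym (Z : 'M[R]_M) (x : 'I_M -> R) : Z^T = - Z ->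
  \sum_i \sum_j x i * Z i j * x j = 0.
Proof.
move=> eZ.
set s0 := (X in X = 0).
have : s0 = - s0.
  rewrite {1}/s0 exchange_big /= -sumrN; apply: eq_bigr => i _.
  rewrite -sumrN; apply: eq_bigr => j _.
  have -> : Z j i = - Z i j by have := congr1 (fun A : 'M[R]_M => A i j) eZ; rewrite !mxE.
  ring.
move=> h; lra.
Qed.

Lemma dot_Gt_orth g h : (forall c c', c != c' -> \tr (G c *m (G c')^T) = 0) ->
  g != h -> dot (Gtensor G g) (Gtensor G h) = 0.
Proof.
move=> orth ngh; rewrite dot_Gtensor.
have [/forallP H|/forallPn [k Hk]] := boolP [forall k, g k == h k].
  have gh : g = h by apply/ffunP => k; apply/eqP.
  by rewrite gh eqxx in ngh.
by rewrite (bigD1 k) //= orth // mul0r.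
Qed.

End Sym.

Section Gexp.
Variable R : realType.
Variables N M : nat.
Local Notation S := (midx N M).
Variable Gam : finType.
Variable nonneg : pred Gam.
Variable g0 : Gam.
Variable G : Gam -> 'M[R]_M.
Hypothesis HG : Gbasis nonneg g0 G.
Implicit Types (g h : {ffun 'I_N -> Gam}) (a : 'I_N -> 'I_M -> R) (x : S -> R).

Definition allnn g := [forall k, nonneg (g k)].

Lemma qf_Gexp0 (c : {ffun 'I_N -> Gam} -> R) a :
  (forall g, allnn g -> c g = 0) -> qf (Gexpand G c) (prodv a) = 0.
Proof.
case: HG => _ [_ [_ [_ [_ [_ [_ asym]]]]]] Hc.
rewrite qf_lin; apply: big1 => g _.
have [/Hc ->|/forallPn [k Hk]] := boolP (allnn g); first by rewrite mul0r.
by rewrite qf_Gtensor (bigD1 k) //= qf_antisym ?asym // mul0r mulr0.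
Qed.

Lemma Gt_sym g : allnn g -> fsymm (Gtensor G g).
Proof.
case: HG => _ [_ [_ [_ [_ [_ [sym _]]]]]] /forallP Hg s t.
apply: eq_bigr => k _; have := congr1 (fun A : 'M[R]_M => A (s k) (t k)) (sym _ (Hg k)); by rewrite !mxE => ->.
Qed.

Lemma Gexp_sym (c : {ffun 'I_N -> Gam} -> R) :
  (forall g, ~~ allnn g -> c g = 0) -> fsymm (Gexpand G c).
Proof.
move=> Hc s t; apply: eq_bigr => g _.
have [/Gt_sym -> //|/Hc ->] := boolP (allnn g); by rewrite !mul0r.
Qed.

Lemma dot_Gexp_orth (c c' : {ffun 'I_N -> Gam} -> R) :
  (forall g, ~~ allnn g -> c g = 0) -> (forall g, allnn g -> c' g = 0) ->
  dot (Gexpand G c) (Gexpand G c') = 0.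
Proof.
case: HG => _ [_ [orth _]] Hc Hc'.
rewrite /Gexpand dot_linl; apply: big1 => g _.
have [gn|gn] := boolP (allnn g); last by rewrite Hc // mul0r.
rewrite dotC dot_linl big1 ?mulr0 // => h _.
have [hn|hn] := boolP (allnn h); first by rewrite Hc' // mul0r.
rewrite dot_Gt_orth ?mulr0 //; apply: contraNneq hn => ->; exact: gn.
Qed.

End Gexp.
Section Sep.
Variable R : realType.
Variable S : finType.
Implicit Types (P X Y : fmat R S) (x : S -> R).

Definition Plin (a : R) P (c : R) (Q : fmat R S) : fmat R S :=
  fun s t => a * P s t + c * Q s t.

Lemma dot_Plin X a P c Q : dot X (Plin a P c Q) = a * dot X P + c * dot X Q.
Proof.
rewrite /dot !mulr_sumr -big_split /=; apply: eq_bigr => s _.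
rewrite !mulr_sumr -big_split; apply: eq_bigr => t _; rewrite /Plin /=; ring.
Qed.

Lemma qf_Plin x a P c Q : qf (Plin a P c Q) x = a * qf P x + c * qf Q x.
Proof.
rewrite /qf !mulr_sumr -big_split /=; apply: eq_bigr => s _.
rewrite !mulr_sumr -big_split; apply: eq_bigr => t _; rewrite /Plin /=; ring.
Qed.

Lemma tr_Plin a P c Q : ftrace (Plin a P c Q) = a * ftrace P + c * ftrace Q.
Proof. by rewrite /ftrace !mulr_sumr -big_split. Qed.

Lemma psd_Plin a P c Q : 0 <= a -> 0 <= c -> fpsd P -> fpsd Q -> fpsd (Plin a P c Q).
Proof.
move=> a0 c0 [sP qP] [sQ qQ]; split => [s t|x]; first by rewrite /Plin sP sQ.
rewrite -/(qf _ x) qf_Plin; apply: addr_ge0; apply: mulr_ge0 => //.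
  exact: qP.
exact: qQ.
Qed.

Lemma dot_fid X : dot X (@fid R S) = ftrace X.
Proof.
apply: eq_bigr => s _; rewrite (bigD1 s) //= /fid eqxx mulr1 big1 ?addr0 //.
by move=> t /negbTE; rewrite eq_sym => ->; rewrite mulr0.
Qed.

Lemma psd_tr_ge0 P : fpsd P -> 0 <= ftrace P.
Proof. by move=> hP; apply: sumr_ge0 => s _; exact: psd_diag. Qed.

Lemma psd_tr0 P : fpsd P -> ftrace P = 0 -> forall s t, P s t = 0.
Proof.
move=> hP t0 s t; apply: psd_row0 => //.
by apply: (psumr_eq0P (P := predT) (F := fun s => P s s)) => // u _; exact: psd_diag.
Qed.

Lemma dot_zero X P : (forall s t, P s t = 0) -> dot X P = 0.
Proof. by move=> H; apply: big1 => s _; apply: big1 => t _; rewrite H mulr0. Qed.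

Lemma psd_entry_le P s t : fpsd P -> `|P s t| <= ftrace P.
Proof.
move=> hP; have [sP qP] := hP.
have key : forall l : R, l ^+ 2 = 1 -> 0 <= P t t + 2 * l * P s t + P s s.
  move=> l l2; have := qP (fun u => del t u + l * del s u).
  rewrite -/(qf P _) qf_addsc // qf_del sum_delr l2 mul1r.
  by rewrite sP.
have h1 : 0 <= P t t + 2 * 1 * P s t + P s s by apply: key; rewrite expr1n.
have h2 : 0 <= P t t + 2 * (-1) * P s t + P s s by apply: key; rewrite sqrrN expr1n.
have dle : forall u, P u u <= ftrace P.
  move=> u; rewrite /ftrace (bigD1 u) //= lerDl.
  by apply: sumr_ge0 => v _; exact: psd_diag.
have := dle s; have := dle t.
rewrite ler_norml; move=> a b; apply/andP; split; lra.
Qed.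

Lemma eps_lemma (a c : R) : 0 <= c ->
  (forall e, 0 < e -> e <= 1 -> 0 <= e * a + e ^+ 2 * c) -> 0 <= a.
Proof.
move=> c0 H; rewrite leNgt; apply/negP => a0.
have ca : 0 < c - a by lra.
pose e := - a / (c - a).
have e0 : 0 < e by rewrite /e divr_gt0 // oppr_gt0.
have e1 : e <= 1 by rewrite /e ler_pdivrMr // mul1r; lra.
have := H e e0 e1.
have -> : e * a + e ^+ 2 * c = e * (a * (- a) / (c - a)).
  rewrite /e; field; exact: lt0r_neq0.
rewrite pmulr_rge0 // => h.
have aa : 0 < a * a by nra.
have : 0 < (a * a) / (c - a) by rewrite divr_gt0.
have eq : a * - a / (c - a) = - ((a * a) / (c - a)) by rewrite mulrN mulNr.
rewrite eq in h; lra.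
Qed.

End Sep.
Section Sep2.
Variable R : realType.
Variable S : finType.
Variable I : finType.
Variable J : pred I.
Variable w : I -> fmat R S.
Variable i0 : I.
Variable b : I -> R.
Hypothesis Ji0 : J i0.
Hypothesis wi0 : forall s t, w i0 s t = @fid R S s t.

Definition fobj (P : fmat R S) := \sum_(i | J i) (dot (w i) P - b i) ^+ 2.

Lemma sum_lin (F H : I -> R) (a c : R) :
  \sum_(i | J i) (a * F i + c * H i) = a * \sum_(i | J i) F i + c * \sum_(i | J i) H i.
Proof. by rewrite big_split /= !mulr_sumr. Qed.

Lemma psd0 : fpsd (fun _ _ : S => 0 : R).
Proof. by split => // x; apply: sumr_ge0 => s _; apply: sumr_ge0 => t _; rewrite mulr0 mul0r. Qed.

Lemma dot0 X : dot X (fun _ _ : S => 0 : R) = 0.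
Proof. exact: dot_zero. Qed.

Lemma tr0 : ftrace (fun _ _ : S => 0 : R) = 0.
Proof. by apply: big1. Qed.

Lemma sep_core :
  (forall T0, 0 <= T0 -> exists P, (fpsd P /\ ftrace P <= T0) /\
      forall P', fpsd P' -> ftrace P' <= T0 -> fobj P <= fobj P') ->
  (forall h : I -> R, (forall P, fpsd P -> 0 <= \sum_(i | J i) h i * dot (w i) P) ->
      0 <= \sum_(i | J i) h i * b i) ->
  exists P, fpsd P /\ forall i, J i -> dot (w i) P = b i.
Proof.
move=> Hmin H3.
set beta := \sum_(i | J i) b i ^+ 2.
have beta0 : 0 <= beta by apply: sumr_ge0 => i _; exact: sqr_ge0.
set T0 := 2 + beta.
have T0pos : 0 < T0 by rewrite /T0; lra.
have [P0 [[pP0 trP0] minP]] := Hmin T0 (ltW T0pos).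
have trz : ftrace (fun _ _ : S => 0 : R) <= T0 by rewrite tr0; exact: ltW.
pose y := fun i => dot (w i) P0.
pose h := fun i => y i - b i.
have [/forallP allok | /forallPn [i1 Hi1]] := boolP [forall i, J i ==> (y i == b i)].
  exists P0; split => // i Ji; apply/eqP; by have := allok i; rewrite Ji.
exfalso.
move: Hi1; rewrite negb_imply => /andP [Ji1 ne1].
have hpos : 0 < \sum_(i | J i) h i ^+ 2.
  rewrite (bigD1 i1) //=; apply: ltr_pwDl; last first.
    by apply: sumr_ge0 => i _; exact: sqr_ge0.
  have hne : h i1 != 0 by rewrite /h subr_eq0.
  by rewrite lt_def sqrf_eq0 hne sqr_ge0.
have dotP : forall a c P Q i, dot (w i) (Plin a P c Q) = a * dot (w i) P + c * dot (w i) Q.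
  by move=> *; exact: dot_Plin.
(* (a) variational inequality *)
have var : forall P, fpsd P -> ftrace P <= T0 ->
    0 <= \sum_(i | J i) h i * (dot (w i) P - y i).
  move=> P pP trP.
  pose d := fun i => dot (w i) P - y i.
  suff : 0 <= 2 * \sum_(i | J i) h i * d i by move=> hh; lra.
  apply: (@eps_lemma _ _ (\sum_(i | J i) d i ^+ 2)).
    by apply: sumr_ge0 => i _; exact: sqr_ge0.
  move=> e e0 e1.
  have pPe : fpsd (Plin (1 - e) P0 e P) by apply: psd_Plin => //; lra.
  have trPe : ftrace (Plin (1 - e) P0 e P) <= T0.
    rewrite tr_Plin.
    have : (1 - e) * ftrace P0 <= (1 - e) * T0 by apply: ler_wpM2l => //; lra.
    have : e * ftrace P <= e * T0 by apply: ler_wpM2l => //; lra.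
    move=> *; lra.
  have := minP _ pPe trPe.
  have -> : fobj (Plin (1 - e) P0 e P) =
      \sum_(i | J i) h i ^+ 2 + e * (2 * \sum_(i | J i) h i * d i) + e ^+ 2 * \sum_(i | J i) d i ^+ 2.
    rewrite /fobj !mulr_sumr -!big_split /=; apply: eq_bigr => i _.
    rewrite dotP /d /h /y; ring.
  rewrite /fobj -/(y _).
  have -> : \sum_(i | J i) (y i - b i) ^+ 2 = \sum_(i | J i) h i ^+ 2 by [].
  move=> hh; lra.
have trlt : ftrace P0 < T0.
  have m0 := minP _ psd0 trz.
  have f0 : fobj (fun _ _ : S => 0) = beta.
    by apply: eq_bigr => i _; rewrite dot0 sub0r sqrrN.
  rewrite f0 in m0.
  have yb : \sum_(i | J i) y i ^+ 2 <= 2 * \sum_(i | J i) h i ^+ 2 + 2 * beta.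
    rewrite /beta -sum_lin; apply: ler_sum => i _; rewrite /h -subr_ge0.
    have -> : 2 * (y i - b i) ^+ 2 + 2 * b i ^+ 2 - y i ^+ 2 = (y i - 2 * b i) ^+ 2 by ring.
    exact: sqr_ge0.
  have yi0 : y i0 = ftrace P0.
    rewrite /y (_ : dot (w i0) P0 = dot (@fid R S) P0); first by rewrite dotC dot_fid.
    by apply: eq_bigr => s _; apply: eq_bigr => t _; rewrite wi0.
  have y0le : y i0 ^+ 2 <= \sum_(i | J i) y i ^+ 2.
    rewrite (bigD1 i0) //= lerDl; apply: sumr_ge0 => i _; exact: sqr_ge0.
  have tr0le := psd_tr_ge0 pP0.
  rewrite yi0 in y0le.
  have m0' : \sum_(i | J i) h i ^+ 2 <= beta by [].
  rewrite ltNge; apply/negP => hT.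
  have : T0 ^+ 2 <= ftrace P0 ^+ 2 by rewrite ler_sqr ?nnegrE ?(ltW T0pos).
  have e : T0 ^+ 2 = 4 * beta + (4 + beta ^+ 2) by rewrite /T0; ring.
  have := sqr_ge0 beta; lra.
have hy0 : \sum_(i | J i) h i * y i = 0.
  have le0 : \sum_(i | J i) h i * y i <= 0.
    have := var _ psd0 trz.
    under eq_bigr => i _ do rewrite dot0 sub0r mulrN.
    by rewrite sumrN oppr_ge0.
  have tr0le := psd_tr_ge0 pP0.
  pose dl := (T0 - (ftrace P0)) / (T0 + 1).
  have dl0 : 0 < dl by rewrite /dl divr_gt0 //; lra.
  have q1 : (ftrace P0) / (T0 + 1) <= 1 by rewrite ler_pdivrMr; lra.
  have q0 : 0 <= (ftrace P0) / (T0 + 1) by rewrite divr_ge0 //; lra.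
  have edt : dl * (ftrace P0) = (T0 - (ftrace P0)) * ((ftrace P0) / (T0 + 1)) by rewrite /dl; field; lra.
  have pP : fpsd (Plin (1 + dl) P0 0 P0) by apply: psd_Plin => //; lra.
  have trP : ftrace (Plin (1 + dl) P0 0 P0) <= T0.
    rewrite tr_Plin mul0r addr0.
    have : (T0 - (ftrace P0)) * ((ftrace P0) / (T0 + 1)) <= T0 - (ftrace P0) by rewrite ler_piMr //; lra.
    rewrite -edt => *; lra.
  have := var _ pP trP.
  have -> : \sum_(i | J i) h i * (dot (w i) (Plin (1 + dl) P0 0 P0) - y i)
          = dl * \sum_(i | J i) h i * y i.
    rewrite mulr_sumr; apply: eq_bigr => i _; rewrite dotP -/(y i); ring.
  rewrite pmulr_rge0 // => *; lra.
have hpsd : forall P, fpsd P -> 0 <= \sum_(i | J i) h i * dot (w i) P.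
  move=> P pP.
  have trle := psd_tr_ge0 pP.
  pose sg := T0 / (1 + ftrace P).
  have sg0 : 0 < sg by rewrite /sg divr_gt0 //; lra.
  have pP' : fpsd (Plin sg P 0 P) by apply: psd_Plin => //; exact: ltW.
  have trP' : ftrace (Plin sg P 0 P) <= T0.
    rewrite tr_Plin mul0r addr0 /sg mulrAC ler_pdivrMr; last lra.
    by rewrite ler_pM2l //; lra.
  have := var _ pP' trP'.
  have -> : \sum_(i | J i) h i * (dot (w i) (Plin sg P 0 P) - y i)
          = sg * \sum_(i | J i) h i * dot (w i) P - \sum_(i | J i) h i * y i.
    rewrite mulr_sumr -sumrB; apply: eq_bigr => i _; rewrite dotP; ring.
  by rewrite hy0 subr0 pmulr_rge0.
have := H3 h hpsd.
have -> : \sum_(i | J i) h i * b i = \sum_(i | J i) h i * y i - \sum_(i | J i) h i ^+ 2.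
  rewrite -sumrB; apply: eq_bigr => i _; rewrite /h; ring.
rewrite hy0 => hh; lra.
Qed.

End Sep2.
Section Topo.
Local Open Scope classical_set_scope.
Variable R : realType.
Variable S : finType.
Local Notation n := #|{: S * S}|.
Local Notation V := 'rV[R]_n.

Definition vec (v : V) : fmat R S := fun s t => v ord0 (enum_rank (s, t)).
Definition toV (P : fmat R S) : V := \row_k P (enum_val k).1 (enum_val k).2.

Lemma vec_toV P : vec (toV P) = P.
Proof. by apply/funext => s; apply/funext => t; rewrite /vec mxE enum_rankK. Qed.

Lemma cont_add (f g : V -> R) : continuous f -> continuous g ->
  continuous (fun v => f v + g v).
Proof. by move=> cf cg x; exact: (continuousD (cf x) (cg x)). Qed.

Lemma cont_mul (f g : V -> R) : continuous f -> continuous g ->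
  continuous (fun v => f v * g v).
Proof. by move=> cf cg x; exact: (continuousM (cf x) (cg x)). Qed.

Lemma cont_neg (f : V -> R) : continuous f -> continuous (fun v => - f v).
Proof. by move=> cf x; exact: (continuousN (cf x)). Qed.

Lemma cont_cst (c : R) : continuous (fun _ : V => c).
Proof. exact: cst_continuous. Qed.

Lemma cont_coord k : continuous (fun v : V => v ord0 k).
Proof. exact: (@coord_continuous R 1 n ord0 k). Qed.

Lemma cont_sum (K : Type) (r : seq K) (P : pred K) (F : K -> V -> R) :
  (forall k, continuous (F k)) -> continuous (fun v => \sum_(k <- r | P k) F k v).
Proof.
move=> cF; elim: r => [|a r IH].
  have -> : (fun v => \sum_(k <- [::] | P k) F k v) = (fun _ => 0).
    by apply/funext => v; rewrite big_nil.
  exact: cont_cst.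
case Pa : (P a).
  have -> : (fun v => \sum_(k <- a :: r | P k) F k v) =
     (fun v => F a v + \sum_(k <- r | P k) F k v).
    by apply/funext => v; rewrite big_cons Pa.
  exact: cont_add.
have -> : (fun v => \sum_(k <- a :: r | P k) F k v) =
   (fun v => \sum_(k <- r | P k) F k v).
  by apply/funext => v; rewrite big_cons Pa.
exact: IH.
Qed.

Lemma cont_entry s t : continuous (fun v => vec v s t).
Proof. exact: cont_coord. Qed.

Lemma cont_dot X : continuous (fun v => dot X (vec v)).
Proof.
apply: cont_sum => s; apply: cont_sum => t; apply: cont_mul.
  exact: cont_cst.
exact: cont_entry.
Qed.

Lemma cont_qf x : continuous (fun v => qf (vec v) x).
Proof.
apply: cont_sum => s; apply: cont_sum => t; apply: cont_mul; last exact: cont_cst.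
apply: cont_mul; [exact: cont_cst | exact: cont_entry].
Qed.

Lemma cont_tr : continuous (fun v => ftrace (vec v)).
Proof. by apply: cont_sum => s; exact: cont_entry. Qed.

Lemma closed_eq0 (F : V -> R) : continuous F -> closed [set v | F v = 0].
Proof.
move=> cF; apply: (@preimage_closed _ _ F [set x : R | x = 0]).
  by move=> v _; exact: cF.
exact: closed_eq.
Qed.

Lemma closed_ge0 (F : V -> R) : continuous F -> closed [set v | 0 <= F v].
Proof.
move=> cF; apply: (@preimage_closed _ _ F [set x : R | 0 <= x]).
  by move=> v _; exact: cF.
exact: closed_ge.
Qed.

Lemma closed_leT (F : V -> R) (T0 : R) : continuous F -> closed [set v | F v <= T0].
Proof.
move=> cF; apply: (@preimage_closed _ _ F [set x : R | x <= T0]).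
  by move=> v _; exact: cF.
exact: closed_le.
Qed.

Variable I : finType.
Variable J : pred I.
Variable w : I -> fmat R S.
Variable b : I -> R.

Lemma exists_min (T0 : R) : 0 <= T0 -> exists P, (fpsd P /\ ftrace P <= T0) /\
      forall P', fpsd P' -> ftrace P' <= T0 -> fobj J w b P <= fobj J w b P'.
Proof.
move=> T00.
pose A := [set v : V | fpsd (vec v) /\ ftrace (vec v) <= T0].
have A0 : A !=set0.
  exists 0; split; last by rewrite /ftrace big1 // => s _; rewrite /vec mxE.
  split => [s t|x]; first by rewrite /vec !mxE.
  by apply: sumr_ge0 => s _; apply: sumr_ge0 => t _; rewrite /vec mxE mulr0 mul0r.
have AE : A = (\bigcap_(p in [set: S * S]) [set v | vec v p.1 p.2 - vec v p.2 p.1 = 0])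
   `&` (\bigcap_(x in [set: S -> R]) [set v | 0 <= qf (vec v) x])
   `&` [set v | ftrace (vec v) <= T0].
  rewrite /A; apply/seteqP; split => v /=.
    case=> [[sP qP] trP]; split => //; split.
      by move=> [s t] _ /=; rewrite sP subrr.
    by move=> x _; exact: qP.
  case=> [[sP qP] trP]; split => //; split.
    by move=> s t; apply/eqP; rewrite -subr_eq0; apply/eqP; exact: (sP (s, t)).
  by move=> x; exact: (qP x).
have Acl : closed A.
  rewrite AE; apply: closedI; first apply: closedI.
  - apply: closed_bigI => p _; apply: closed_eq0.
    by apply: cont_add; [exact: cont_entry | apply: cont_neg; exact: cont_entry].
  - by apply: closed_bigI => x _; apply: closed_ge0; exact: cont_qf.
  - by apply: closed_leT; exact: cont_tr.
have Acp : compact A.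
  apply: (@subclosed_compact _ A [set v : V | forall i, (fun=> `[- T0, T0]%classic) i (v ord0 i)] Acl).
    exact: (@rV_compact R n (fun=> `[- T0, T0]%classic) (fun _ => @segment_compact R (- T0) T0)).
  move=> v [pv trv] i /=.
  have := psd_entry_le (enum_val i).1 (enum_val i).2 pv.
  rewrite /vec -surjective_pairing enum_valK => hle.
  have : `|v ord0 i| <= T0 by exact: le_trans hle trv.
  by rewrite ler_norml in_itv /=.
have cf : continuous (fun v => fobj J w b (vec v)).
  apply: cont_sum => i; apply: cont_mul; apply: cont_add;
    (exact: cont_dot || exact: cont_cst).
have cw : {within A, continuous (fun v => fobj J w b (vec v))}.
  by apply: continuous_subspaceT.
have [c cA minc] := EVT_min_rV A0 Acp cw.
move: cA; rewrite inE => -[pc trc].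
exists (vec c); split => // P' pP' trP'.
have := minc (toV P'); rewrite vec_toV; apply; rewrite inE; split; rewrite vec_toV //.
Qed.

End Topo.
Section Main.
Variable R : realType.
Variables N M D : nat.
Local Notation S := (midx N M).
Variable Gam : finType.
Variable nonneg : pred Gam.
Variable g0 : Gam.
Variable G : Gam -> 'M[R]_M.
Hypothesis HG : Gbasis nonneg g0 G.
Variable T : 'I_D -> S -> R.
Local Notation A := (TdagT T).
Local Notation Id := (@fid R S).

Lemma TdagT_sym D' (T' : 'I_D' -> S -> R) : fsymm (TdagT T').
Proof. by move=> s t; apply: eq_bigr => i _; rewrite mulrC. Qed.

Lemma ftrace_fmul (X Y : fmat R S) : fsymm Y -> ftrace (fmul X Y) = dot X Y.
Proof.
move=> sY; apply: eq_bigr => s _; apply: eq_bigr => u _; by rewrite sY.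
Qed.

Lemma dot_sub3 (X Y1 Y2 Y3 : fmat R S) :
  dot X (fun s t => Y1 s t - (Y2 s t + Y3 s t)) = dot X Y1 - dot X Y2 - dot X Y3.
Proof.
rewrite /dot -!sumrB; apply: eq_bigr => s _; rewrite -!sumrB.
by apply: eq_bigr => t _; ring.
Qed.

Lemma dot_sub (X Y1 Y2 : fmat R S) :
  dot X (fun s t => Y1 s t - Y2 s t) = dot X Y1 - dot X Y2.
Proof.
rewrite /dot -!sumrB; apply: eq_bigr => s _; rewrite -!sumrB.
by apply: eq_bigr => t _; ring.
Qed.

Lemma qf_sub3 (Y1 Y2 Y3 : fmat R S) x :
  qf (fun s t => Y1 s t - (Y2 s t + Y3 s t)) x = qf Y1 x - qf Y2 x - qf Y3 x.
Proof.
rewrite /qf -!sumrB; apply: eq_bigr => s _; rewrite -!sumrB.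
by apply: eq_bigr => t _; ring.
Qed.

Lemma qf_sub (Y1 Y2 : fmat R S) x :
  qf (fun s t => Y1 s t - Y2 s t) x = qf Y1 x - qf Y2 x.
Proof.
rewrite /qf -!sumrB; apply: eq_bigr => s _; rewrite -!sumrB.
by apply: eq_bigr => t _; ring.
Qed.

Lemma dot_TdagT D' (X : fmat R S) (T' : 'I_D' -> S -> R) :
  dot X (TdagT T') = \sum_i qf X (T' i).
Proof.
rewrite dotC (@dot_decomp _ _ _ (fun _ => 1) T') => [|s t].
  by apply: eq_bigr => i _; rewrite mul1r.
by apply: eq_bigr => i _; rewrite mul1r.
Qed.

Lemma prod_del (s t : S) : \prod_k ((t k == s k)%:R : R) = (t == s)%:R.
Proof.
have [/forallP H|/forallPn [k Hk]] := boolP [forall k, t k == s k].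
  have -> : t = s by apply/ffunP => k; apply/eqP.
  by rewrite eqxx big1 // => k _; rewrite eqxx.
rewrite (bigD1 k) //= (negbTE Hk) mul0r.
by case: eqP => // ts; move: Hk; rewrite ts eqxx.
Qed.

Lemma Gt_g0 s t : Gtensor G [ffun => g0] s t = Id s t.
Proof.
case: HG => _ [_ [_ [_ [_ [G0 _]]]]].
rewrite /Gtensor /fid.
under eq_bigr => k _ do rewrite ffunE G0 mxE.
by rewrite (prod_del t s); case: (s == t).
Qed.

Lemma psd_outer (x : S -> R) : fpsd (fun s t => x s * x t).
Proof.
split => [s t|y]; first by rewrite mulrC.
have -> : \sum_s \sum_t y s * (x s * x t) * y t = (\sum_s x s * y s) ^+ 2.
  rewrite expr2 mulr_suml; apply: eq_bigr => s _; rewrite mulr_sumr.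
  by apply: eq_bigr => t _; ring.
exact: sqr_ge0.
Qed.

Lemma psd_fid : fpsd Id.
Proof.
split => [s t|y]; first by rewrite /fid eq_sym.
rewrite -/(qf _ y) qf_fid; apply: sumr_ge0 => s _; exact: sqr_ge0.
Qed.


Definition cond1 := exists (D' : nat) (Tt : 'I_D' -> midx N M -> R),
  (D <= D')%N /\ norm_preserving Tt /\
  forall (a : 'I_N -> 'I_M -> R) (i : 'I_D) (j : 'I_D'),
    val i = val j -> mlapply Tt a j = mlapply T a i.
Definition cond2 := exists c : {ffun 'I_N -> Gam} -> R,
  (forall g : {ffun 'I_N -> Gam}, [forall k, nonneg (g k)] -> c g = 0) /\
  fsymm (Gexpand G c) /\
  floe (fun s t => TdagT T s t + Gexpand G c s t) (@fid R _).
Definition cond3 := forall c : {ffun 'I_N -> Gam} -> R,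
  (forall g : {ffun 'I_N -> Gam}, ~~ [forall k, nonneg (g k)] -> c g = 0) ->
  density (Gexpand G c) ->
  ftrace (fmul (Gexpand G c) (TdagT T)) <= 1.

Lemma impl23 : cond2 -> cond3.
Proof.
move=> [c [Hc0 [Hsym Hle]]] c' Hc' [pr tr1].
rewrite ftrace_fmul; last exact: TdagT_sym.
have hP := dot_psd pr Hle.
rewrite dot_sub3 dot_fid tr1 (dot_Gexp_orth HG Hc' Hc0) in hP.
lra.
Qed.

Lemma split_lshift m n (i : 'I_m) : split (lshift n i) = inl i.
Proof. exact: (unsplitK (inl i : 'I_m + 'I_n)). Qed.

Lemma split_rshift m n (i : 'I_n) : split (rshift m i) = inr i.
Proof. exact: (unsplitK (inr i : 'I_m + 'I_n)). Qed.

Lemma impl21 : cond2 -> cond1.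
Proof.
move=> [c [Hc0 [Hsym Hle]]].
have [l Hl] := psd_factor Hle.
pose Tt := fun (i : 'I_(D + size l)) (s : S) =>
  match split i with inl i' => T i' s | inr j => nth (fun _ => 0) l j s end.
have HTl : forall a i, mlapply Tt a (lshift (size l) i) = mlapply T a i.
  by move=> a i; rewrite /mlapply /Tt split_lshift.
exists (D + size l), Tt; split; first exact: leq_addr.
split; last first.
  move=> a i j Hij; have -> : j = lshift (size l) i by apply: val_inj.
  exact: HTl.
apply/norm_pres_qf => a.
rewrite -mlapply_sq big_split_ord /=.
under eq_bigr => i _ do rewrite HTl.
rewrite mlapply_sq.
have -> : \sum_(i < size l) mlapply Tt a (rshift D i) ^+ 2 =
          qf (fun s t => \sum_(v <- l) v s * v t) (prodv a).
  rewrite qf_sumv (big_nth (fun _ => 0)) big_mkord; apply: eq_big => // j _.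
  rewrite /mlapply /Tt split_rshift; congr (_ ^+ 2).
have -> : qf (fun s t => \sum_(v <- l) v s * v t) (prodv a) =
    qf (fun s t => Id s t - (A s t + Gexpand G c s t)) (prodv a).
  by apply: eq_bigr => s _; apply: eq_bigr => t _; rewrite -Hl.
rewrite qf_sub3 (qf_Gexp0 HG) //; ring.
Qed.

Lemma impl13 : cond1 -> cond3.
Proof.
move=> [D' [Tt [HD [Hnp Hag]]]] c' Hc' [pr tr1].
rewrite ftrace_fmul; last exact: TdagT_sym.
have Hrow : forall (i : 'I_D) s, Tt (widen_ord HD i) s = T i s.
  move=> i s; have := Hag (fun k p => ((p == s k)%:R : R)) i (widen_ord HD i) erefl.
  rewrite /mlapply => e.
  have E : forall F : S -> R, \sum_t F t * \prod_k ((t k == s k)%:R : R) = F s.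
    by move=> F; rewrite -[RHS](sum_delr F s); apply: eq_bigr => t _; rewrite prod_del.
  by rewrite !E in e.
have HY : forall a, qf (fun s t => TdagT Tt s t - Id s t) (prodv a) = 0.
  by move=> a; rewrite qf_sub (proj1 (norm_pres_qf Tt) Hnp a) subrr.
have dY : dot (Gexpand G c') (fun s t => TdagT Tt s t - Id s t) = 0.
  rewrite /Gexpand dot_linl; apply: big1 => g _.
  have [gn|gn] := boolP (allnn nonneg g); last by rewrite Hc' // mul0r.
  rewrite qf0_dot ?mulr0 // => k.
  case: HG => _ [_ [_ [_ [_ [_ [sym _]]]]]]; apply: sym.
  by move/forallP: gn.
rewrite dot_sub dot_fid tr1 in dY.
have e1 : dot (Gexpand G c') (TdagT Tt) = 1 by lra.
rewrite -e1 !dot_TdagT.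
have -> : \sum_i qf (Gexpand G c') (T i) = \sum_(i < D) qf (Gexpand G c') (Tt (widen_ord HD i)).
  by apply: eq_bigr => i _; congr qf; apply/funext => s; rewrite Hrow.
have E : \sum_(i < D' | (i < D)%N) qf (Gexpand G c') (Tt i) =
    \sum_(i < D) qf (Gexpand G c') (Tt (widen_ord HD i)) by rewrite (big_ord_narrow HD).
rewrite -E.
rewrite [X in _ <= X](bigID (fun j : 'I_D' => (j < D)%N)) /= lerDl.
by apply: sumr_ge0 => j _; exact: (proj2 pr).
Qed.

Lemma fpsd_scale (X : fmat R S) (a : R) : 0 <= a -> fpsd X -> fpsd (fun s t => a * X s t).
Proof.
move=> a0 hX; have := psd_Plin a0 (lexx 0) hX hX.
have -> : Plin a X 0 X = (fun s t => a * X s t).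
  by apply/funext => s; apply/funext => t; rewrite /Plin mul0r addr0.
done.
Qed.

Lemma impl32 : cond3 -> cond2.
Proof.
move=> H3.
pose B := fun s t => Id s t - A s t.
have [P [pP HP]] : exists P, fpsd P /\ forall g, allnn nonneg g ->
    dot (Gtensor G g) P = dot (Gtensor G g) B.
  apply: (@sep_core R S {ffun 'I_N -> Gam} (allnn nonneg) (Gtensor G) [ffun => g0]
            (fun g => dot (Gtensor G g) B)).
  - case: HG => _ [_ [_ [_ [nn0 _]]]]; by apply/forallP => k; rewrite ffunE.
  - exact: Gt_g0.
  - by move=> T0 T00; apply: exists_min.
  move=> h Hh.
  pose c'' := fun g => if allnn nonneg g then h g else 0.
  pose r0 := Gexpand G c''.
  have dr : forall X, dot r0 X = \sum_(g | allnn nonneg g) h g * dot (Gtensor G g) X.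
    move=> X; rewrite /r0 /Gexpand dot_linl (bigID (allnn nonneg)) /=.
    rewrite [X in _ + X]big1 ?addr0; last first.
      by move=> g /negbTE gn; rewrite /c'' gn mul0r.
    by apply: eq_bigr => g gn; rewrite /c'' gn.
  rewrite -dr.
  have c0 : forall g, ~~ allnn nonneg g -> c'' g = 0 by move=> g /negbTE gn; rewrite /c'' gn.
  have pr0 : fpsd r0.
    split; first exact: (Gexp_sym HG c0).
    move=> x; rewrite -/(qf _ x) -dot_outer dr; apply: Hh; exact: psd_outer.
  have tau0 : 0 <= ftrace r0 by rewrite -dot_fid dr; apply: Hh; exact: psd_fid.
  have [t0|tpos] := eqVneq (ftrace r0) 0.
    by rewrite dotC dot_zero //; exact: psd_tr0.
  have tp : 0 < ftrace r0 by rewrite lt_def tpos tau0.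
  pose c3 := fun g => c'' g / ftrace r0.
  have E3 : Gexpand G c3 = (fun s t => (ftrace r0)^-1 * r0 s t).
    apply/funext => s; apply/funext => t; rewrite /Gexpand mulr_sumr.
    by apply: eq_bigr => g _; rewrite /c3; ring.
  have := H3 c3 _ _.
  rewrite E3 ftrace_fmul; last exact: TdagT_sym.
  have -> : dot (fun s t => (ftrace r0)^-1 * r0 s t) A = (ftrace r0)^-1 * dot r0 A.
    by rewrite /dot mulr_sumr; apply: eq_bigr => s _; rewrite mulr_sumr; apply: eq_bigr => t _; ring.
  move=> /(_ _ _) H.
  have Hd : (ftrace r0)^-1 * dot r0 A <= 1.
    apply: H.
    - by move=> g gn; rewrite /c3 c0 // mul0r.
    - split; first by rewrite -E3 E3; apply: fpsd_scale => //; rewrite invr_ge0.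
      by rewrite /ftrace -mulr_sumr mulVf.
  rewrite /B dot_sub dot_fid subr_ge0.
  by move: Hd; rewrite ler_pdivrMl // mulr1.
pose Qm := fun s t => B s t - P s t.
pose c := fun g => if allnn nonneg g then 0 else dot (Gtensor G g) Qm / ng G g.
have GQ : Gexpand G c = Qm.
  apply/funext => s; apply/funext => t.
  rewrite [RHS](span_tensor HG Qm s t); apply: eq_bigr => g _.
  rewrite /c; case: ifP => gn //.
  by rewrite /Qm dot_sub HP // subrr !mul0r.
exists c; split; first by move=> g gn; rewrite /c; case: ifP => // /negbT; rewrite /allnn gn.
rewrite GQ; split.
  by move=> s t; rewrite /Qm /B (TdagT_sym T s t) pP.1 /fid eq_sym.
rewrite /floe /=.
have -> : (fun s t => Id s t - (A s t + Qm s t)) = P.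
  by apply/funext => s; apply/funext => t; rewrite /Qm /B; ring.
exact: pP.
Qed.

End Main.

End Dev.
Unset Implicit Arguments.

Theorem proposition7 (R : realType) (N M D : nat)
  (Gam : finType) (nonneg : pred Gam) (g0 : Gam) (G : Gam -> 'M[R]_M)
  (HG : Gbasis nonneg g0 G)
  (T : 'I_D -> midx N M -> R) (HT : is_contraction T) :
  [<-> (* 1. norm-preserving dilation *)
       (exists (D' : nat) (Tt : 'I_D' -> midx N M -> R),
          (D <= D')%N /\ norm_preserving Tt /\
          forall (a : 'I_N -> 'I_M -> R) (i : 'I_D) (j : 'I_D'),
            val i = val j -> mlapply Tt a j = mlapply T a i);
       (* 2. Q = sum_g c_g ⊗ G_{g_k}, c_g = 0 if all g_k >= 0, 1 >= T^T T + Q *)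
       (exists c : {ffun 'I_N -> Gam} -> R,
          (forall g : {ffun 'I_N -> Gam}, [forall k, nonneg (g k)] -> c g = 0) /\
          fsymm (Gexpand G c) /\
          floe (fun s t => TdagT T s t + Gexpand G c s t) (@fid R _));
       (* 3. tr[rho T^T T] <= 1 for all density matrices rho = sum_{g>=0} c_g ⊗ G_{g_k} *)
       (forall c : {ffun 'I_N -> Gam} -> R,
          (forall g : {ffun 'I_N -> Gam}, ~~ [forall k, nonneg (g k)] -> c g = 0) ->
          density (Gexpand G c) ->
          ftrace (fmul (Gexpand G c) (TdagT T)) <= 1)].
Proof.
constructor; [|constructor].
- move=> h1; apply: (Dev.impl32 HG); exact: (Dev.impl13 HG h1).
- exact: (Dev.impl23 HG).
- move=> h3; apply: (Dev.impl21 HG); exact: (Dev.impl32 HG h3).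
Qed.
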